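(* For all record types $\rho_1,\rho_2\in\mathbb{T}_R$: $\rho_1+\rho_2=\rho_1\cap\rho_2$ if and only if $\rho_1+\rho_2\le\rho_1$.
   Context: $\mathbb{T}\ni\sigma ::= a\mid\omega\mid\sigma_1\to\sigma_2\mid\sigma_1\cap\sigma_2\mid\rho$ and record types $\mathbb{T}_R\ni\rho ::= \langle\rangle\mid\langle l:\sigma\rangle\mid\rho_1+\rho_2\mid\rho_1\cap\rho_2$. Subtyping $\le$ is the least preorder with: $\sigma\le\omega$; $\omega\le\omega\to\omega$; $\sigma\cap\tau\le\sigma$; $\sigma\cap\tau\le\tau$; $\sigma\le\tau_1,\sigma\le\tau_2\Rightarrow\sigma\le\tau_1\cap\tau_2$; $(\sigma\to\tau_1)\cap(\sigma\to\tau_2)\le\sigma\to\tau_1\cap\tau_2$; $\sigma_2\le\sigma_1,\tau_1\le\tau_2\Rightarrow\sigma_1\to\tau_1\le\sigma_2\to\tau_2$; $\langle l:\sigma\rangle\le\langle\rangle$; $\langle l:\sigma\rangle\cap\langle l:\tau\rangle\le\langle l:\sigma\cap\tau\rangle$; $\sigma\le\tau\Rightarrow\langle l:\sigma\rangle\le\langle l:\tau\rangle$; $\rho+\langle\rangle=\langle\rangle+\rho=\rho$; $(\rho_1+\rho_2)+\rho_3=\rho_1+(\rho_2+\rho_3)$; $(\rho_1\cap\rho_2)+\rho_3=(\rho_1+\rho_3)\cap(\rho_2+\rho_3)$; $\langle l:\sigma\rangle+(\langle l:\tau\rangle\cap\rho)=\langle l:\tau\rangle\cap\rho$; $\langle l:\sigma\rangle+(\langle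 l':\tau\rangle\cap\rho)=\langle l':\tau\rangle\cap(\langle l:\sigma\rangle+\rho)$ if $l\neq l'$; $\rho_1\le\rho_2\Rightarrow\rho_1+\rho\le\rho_2+\rho$; $\rho_1=\rho_2\Rightarrow\rho+\rho_1=\rho+\rho_2$. $=$ means $\le$ in both directions. *)

(* Defs.v *)
(* One syntax for all types; record types are the subset singled out by [is_rec].
   Atoms and labels are natural numbers. *)
Inductive ty : Type :=
| TAtom  : nat -> ty
| TOmega : ty
| TArr   : ty -> ty -> ty
| TInter : ty -> ty -> ty
| TEmpty : ty
| TField : nat -> ty -> ty
| TPlus  : ty -> ty -> ty.

Inductive is_rec : ty -> Prop :=
| rec_empty : is_rec TEmpty
| rec_field : forall l s, is_rec (TField l s)
| rec_plus  : forall r1 r2, is_rec r1 -> is_rec r2 -> is_rec (TPlus r1 r2)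
| rec_inter : forall r1 r2, is_rec r1 -> is_rec r2 -> is_rec (TInter r1 r2).

(* Subtyping: the least preorder closed under the listed rules.
   Each equation  A = B  contributes the two rules A <= B and B <= A. *)
Inductive sub : ty -> ty -> Prop :=
| sub_refl  : forall s, sub s s
| sub_trans : forall s t u, sub s t -> sub t u -> sub s u
| sub_omega : forall s, sub s TOmega
| sub_omega_arr : sub TOmega (TArr TOmega TOmega)
| sub_inter_l : forall s t, sub (TInter s t) s
| sub_inter_r : forall s t, sub (TInter s t) t
| sub_glb : forall s t1 t2, sub s t1 -> sub s t2 -> sub s (TInter t1 t2)
| sub_arr_inter : forall s t1 t2,
    sub (TInter (TArr s t1) (TArr s t2)) (TArr s (TInter t1 t2))
| sub_arr : forall s1 s2 t1 t2, sub s2 s1 -> sub t1 t2 ->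
    sub (TArr s1 t1) (TArr s2 t2)
| sub_field_empty : forall l s, sub (TField l s) TEmpty
| sub_field_inter : forall l s t,
    sub (TInter (TField l s) (TField l t)) (TField l (TInter s t))
| sub_field : forall l s t, sub s t -> sub (TField l s) (TField l t)
| sub_plus_empty_r1 : forall r, is_rec r -> sub (TPlus r TEmpty) r
| sub_plus_empty_r2 : forall r, is_rec r -> sub r (TPlus r TEmpty)
| sub_plus_empty_l1 : forall r, is_rec r -> sub (TPlus TEmpty r) r
| sub_plus_empty_l2 : forall r, is_rec r -> sub r (TPlus TEmpty r)
| sub_plus_assoc1 : forall r1 r2 r3, is_rec r1 -> is_rec r2 -> is_rec r3 ->
    sub (TPlus (TPlus r1 r2) r3) (TPlus r1 (TPlus r2 r3))
| sub_plus_assoc2 : forall r1 r2 r3, is_rec r1 -> is_rec r2 -> is_rec r3 ->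
    sub (TPlus r1 (TPlus r2 r3)) (TPlus (TPlus r1 r2) r3)
| sub_plus_inter1 : forall r1 r2 r3, is_rec r1 -> is_rec r2 -> is_rec r3 ->
    sub (TPlus (TInter r1 r2) r3) (TInter (TPlus r1 r3) (TPlus r2 r3))
| sub_plus_inter2 : forall r1 r2 r3, is_rec r1 -> is_rec r2 -> is_rec r3 ->
    sub (TInter (TPlus r1 r3) (TPlus r2 r3)) (TPlus (TInter r1 r2) r3)
| sub_plus_same1 : forall l s t r, is_rec r ->
    sub (TPlus (TField l s) (TInter (TField l t) r)) (TInter (TField l t) r)
| sub_plus_same2 : forall l s t r, is_rec r ->
    sub (TInter (TField l t) r) (TPlus (TField l s) (TInter (TField l t) r))
| sub_plus_diff1 : forall l l' s t r, l <> l' -> is_rec r ->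
    sub (TPlus (TField l s) (TInter (TField l' t) r))
        (TInter (TField l' t) (TPlus (TField l s) r))
| sub_plus_diff2 : forall l l' s t r, l <> l' -> is_rec r ->
    sub (TInter (TField l' t) (TPlus (TField l s) r))
        (TPlus (TField l s) (TInter (TField l' t) r))
| sub_plus_mono_l : forall r1 r2 r, is_rec r1 -> is_rec r2 -> is_rec r ->
    sub r1 r2 -> sub (TPlus r1 r) (TPlus r2 r)
(* r1 = r2  ==>  r + r1 = r + r2  (the reverse inclusion is the instance with r1, r2 swapped) *)
| sub_plus_cong_r : forall r r1 r2, is_rec r -> is_rec r1 -> is_rec r2 ->
    sub r1 r2 -> sub r2 r1 -> sub (TPlus r r1) (TPlus r r2).

Definition eqty (s t : ty) : Prop := sub s t /\ sub t s.

(* Main.v *)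
Require Import Defs.
From Stdlib Require Import List Arith.
Import ListNotations.

Fixpoint nf (xs : list (nat * ty)) : ty :=
  match xs with
  | [] => TEmpty
  | (l, s) :: xs' => TInter (TField l s) (nf xs')
  end.

Lemma nf_rec : forall xs, is_rec (nf xs).
Proof. induction xs as [|[l s] xs IH]; simpl; constructor; auto; constructor. Qed.

Lemma nf_empty : forall xs, sub (nf xs) TEmpty.
Proof.
  induction xs as [|[l s] xs IH]; simpl. apply sub_refl.
  eapply sub_trans. apply sub_inter_l. apply sub_field_empty.
Qed.

Lemma inter_mono : forall a b c d, sub a c -> sub b d -> sub (TInter a b) (TInter c d).
Proof.
  intros. apply sub_glb.
  eapply sub_trans. apply sub_inter_l. auto.
  eapply sub_trans. apply sub_inter_r. auto.
Qed.

Lemma tr : forall s t u, sub s t -> sub t u -> sub s u.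
Proof. exact sub_trans. Qed.

Lemma app_nf : forall xs ys, eqty (TInter (nf xs) (nf ys)) (nf (xs ++ ys)).
Proof.
  induction xs as [|[l s] xs IH]; intros ys; simpl; split.
  - apply sub_inter_r.
  - apply sub_glb. apply nf_empty. apply sub_refl.
  - destruct (IH ys) as [H1 H2].
    apply sub_glb. eapply tr. apply sub_inter_l. apply sub_inter_l.
    eapply tr; [|exact H1]. apply inter_mono; [apply sub_inter_r|apply sub_refl].
  - destruct (IH ys) as [H1 H2].
    apply sub_glb. apply sub_glb. apply sub_inter_l.
    eapply tr. apply sub_inter_r. eapply tr. exact H2. apply sub_inter_l.
    eapply tr. apply sub_inter_r. eapply tr. exact H2. apply sub_inter_r.
Qed.

Lemma fplus : forall l s ys, exists zs, eqty (TPlus (TField l s) (nf ys)) (nf zs).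
Proof.
  intros l s ys; induction ys as [|[l' t] ys IH]; simpl.
  - exists [(l, s)]; simpl; split.
    + eapply tr. apply sub_plus_empty_r1. constructor.
      apply sub_glb. apply sub_refl. apply sub_field_empty.
    + eapply tr. apply sub_inter_l. apply sub_plus_empty_r2. constructor.
  - destruct (Nat.eq_dec l l') as [->|Hne].
    + exists ((l', t) :: ys); simpl; split.
      apply sub_plus_same1, nf_rec. apply sub_plus_same2, nf_rec.
    + destruct IH as [zs [H1 H2]]. exists ((l', t) :: zs); simpl; split.
      * eapply tr. apply sub_plus_diff1; auto using nf_rec.
        apply inter_mono. apply sub_refl. exact H1.
      * eapply tr; [|apply sub_plus_diff2; auto using nf_rec].
        apply inter_mono. apply sub_refl. exact H2.
Qed.

Lemma plus_nf : forall xs ys, exists zs, eqty (TPlus (nf xs) (nf ys)) (nf zs).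
Proof.
  induction xs as [|[l s] xs IH]; intros ys; simpl.
  - exists ys; split. apply sub_plus_empty_l1, nf_rec. apply sub_plus_empty_l2, nf_rec.
  - destruct (fplus l s ys) as [z1 [A1 A2]].
    destruct (IH ys) as [z2 [B1 B2]].
    destruct (app_nf z1 z2) as [C1 C2].
    exists (z1 ++ z2); split.
    + eapply tr. apply sub_plus_inter1; auto using nf_rec; constructor.
      eapply tr; [|exact C1]. apply inter_mono; auto.
    + eapply tr; [|apply sub_plus_inter2; auto using nf_rec; constructor].
      eapply tr. exact C2. apply inter_mono; auto.
Qed.

Lemma plus_cong : forall a b c d, is_rec a -> is_rec b -> is_rec c -> is_rec d ->
  eqty a c -> eqty b d -> eqty (TPlus a b) (TPlus c d).
Proof.
  intros a b c d Ha Hb Hc Hd [H1 H2] [H3 H4]; split.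
  - apply (tr _ (TPlus c b)). apply sub_plus_mono_l; auto. apply sub_plus_cong_r; auto.
  - apply (tr _ (TPlus a d)). apply sub_plus_mono_l; auto. apply sub_plus_cong_r; auto.
Qed.

Lemma norm : forall r, is_rec r -> exists xs, eqty r (nf xs).
Proof.
  intros r Hr; induction Hr.
  - exists []; split; apply sub_refl.
  - exists [(l, s)]; simpl; split.
    apply sub_glb. apply sub_refl. apply sub_field_empty. apply sub_inter_l.
  - destruct IHHr1 as [xs Hx]. destruct IHHr2 as [ys Hy].
    destruct (plus_nf xs ys) as [zs [Z1 Z2]].
    destruct (plus_cong r1 r2 (nf xs) (nf ys)) as [P1 P2]; auto using nf_rec.
    exists zs; split; eapply tr; eauto.
  - destruct IHHr1 as [xs [X1 X2]]. destruct IHHr2 as [ys [Y1 Y2]].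
    destruct (app_nf xs ys) as [C1 C2].
    exists (xs ++ ys); split; eapply tr; eauto; apply inter_mono; auto.
Qed.

Lemma P1 : forall xs ys, sub (TPlus (nf xs) (nf ys)) (nf ys).
Proof.
  induction xs as [|[l s] xs IH]; intros ys; simpl.
  - apply sub_plus_empty_l1, nf_rec.
  - eapply tr. apply sub_plus_inter1; auto using nf_rec; constructor.
    eapply tr. apply sub_inter_r. apply IH.
Qed.

Lemma F : forall l s ys, sub (TInter (TField l s) (nf ys)) (TPlus (TField l s) (nf ys)).
Proof.
  intros l s ys; induction ys as [|[l' t] ys IH]; simpl.
  - eapply tr. apply sub_inter_l. apply sub_plus_empty_r2; constructor.
  - destruct (Nat.eq_dec l l') as [->|Hne].
    + eapply tr. apply sub_inter_r. apply sub_plus_same2, nf_rec.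
    + eapply tr; [|apply sub_plus_diff2; auto using nf_rec].
      apply sub_glb.
      * eapply tr. apply sub_inter_r. apply sub_inter_l.
      * eapply tr; [|exact IH]. apply inter_mono. apply sub_refl. apply sub_inter_r.
Qed.

Lemma P2 : forall xs ys, sub (TInter (nf xs) (nf ys)) (TPlus (nf xs) (nf ys)).
Proof.
  induction xs as [|[l s] xs IH]; intros ys; simpl.
  - eapply tr. apply sub_inter_r. apply sub_plus_empty_l2, nf_rec.
  - eapply tr; [|apply sub_plus_inter2; auto using nf_rec; constructor].
    apply sub_glb.
    + eapply tr; [|apply F]. apply inter_mono. apply sub_inter_l. apply sub_refl.
    + eapply tr; [|apply IH]. apply inter_mono. apply sub_inter_r. apply sub_refl.
Qed.

Theorem lemma3p9 : forall r1 r2 : ty, is_rec r1 -> is_rec r2 ->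
  (eqty (TPlus r1 r2) (TInter r1 r2) <-> sub (TPlus r1 r2) r1).
Proof.
  intros r1 r2 H1 H2; split.
  - intros [A B]. eapply tr. exact A. apply sub_inter_l.
  - intros H.
    destruct (norm r1 H1) as [xs [X1 X2]]. destruct (norm r2 H2) as [ys [Y1 Y2]].
    assert (EX : eqty r1 (nf xs)) by (split; auto).
    assert (EY : eqty r2 (nf ys)) by (split; auto).
    destruct (plus_cong r1 r2 (nf xs) (nf ys)) as [Q1 Q2]; auto using nf_rec.
    split.
    + apply sub_glb. exact H.
      eapply tr. exact Q1. eapply tr. apply P1. exact Y2.
    + eapply tr; [|exact Q2]. eapply tr; [|apply P2]. apply inter_mono; auto.
Qed.
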